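(* Let $\hat R$ be the $4\times 4$ matrix $$\hat R=\begin{pmatrix}1&0&0&1\\0&1&-1&0\\0&1&1&0\\-1&0&0&1\end{pmatrix},$$ let $c$ be a complex-valued function on a multiplicatively closed set $G\subseteq\mathbb C\setminus\{0\}$ (e.g. $G=\mathbb C\setminus\{0\}$), and set $\hat R(x)=I+c(x)\hat R$. Then for all $x,y\in G$, $$\hat R_{(12)}(x)\hat R_{(23)}(xy)\hat R_{(12)}(y)-\hat R_{(23)}(y)\hat R_{(12)}(xy)\hat R_{(23)}(x)=\big(c(x)+c(y)+2c(x)c(y)-c(xy)\big)\big(\hat R_{(12)}-\hat R_{(23)}\big).$$ Consequently $\hat R(x)$ satisfies the parametrised Yang–Baxter equation $\hat R_{(12)}(x)\hat R_{(23)}(xy)\hat R_{(12)}(y)=\hat R_{(23)}(y)\hat R_{(12)}(xy)\hat R_{(23)}(x)$ for all $x,y\in G$ if and only if $c(x)+c(y)+2c(x)c(y)=c(xy)$ for all $x,y\in G$; in particular this holds for $c(x)=\tfrac12(x^p-1)$ for any integer $p$.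
   Context: $I$ is the identity matrix of the relevant size. For a $4\times4$ matrix $A$ acting on $\mathbb C^2\otimes\mathbb C^2$ (basis ordered $e_1\otimes e_1,e_1\otimes e_2,e_2\otimes e_1,e_2\otimes e_2$), $A_{(12)}=A\otimes I_2$ and $A_{(23)}=I_2\otimes A$ acting on $(\mathbb C^2)^{\otimes 3}$. *)

(* Defs.v *)
From HB Require Import structures.
From mathcomp Require Import all_boot all_order all_algebra.
From mathcomp Require Import complex mxtens.
Set Implicit Arguments. Unset Strict Implicit. Unset Printing Implicit Defensive.
Import Order.TTheory GRing.Theory Num.Theory.
Local Open Scope ring_scope.

(* Complex numbers: R[i] for a real closed field R (R[i] = C when R = the reals). *)

(* The 4x4 matrix \hat R, basis ordered e1e1, e1e2, e2e1, e2e2. *)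
Definition Rhat_entries : seq (seq int) :=
  [:: [:: 1; 0; 0; 1];
      [:: 0; 1; -1; 0];
      [:: 0; 1; 1; 0];
      [:: -1; 0; 0; 1]].

Definition Rhat (R : rcfType) : 'M[R[i]]_4 :=
  \matrix_(a < 4, b < 4) ((nth 0 (nth [::] Rhat_entries a) b)%:~R).

Definition Rhatx (R : rcfType) (c : R[i] -> R[i]) (x : R[i]) : 'M[R[i]]_4 :=
  1%:M + c x *: Rhat R.

(* A_(12) = A (x) I_2 and A_(23) = I_2 (x) A on (C^2)^{(x)3}; mxtens uses the
   row-major Kronecker convention (index (i,j) |-> i*n + j). *)
Definition M12 (K : pzRingType) (A : 'M[K]_4) : 'M[K]_8 := A *t (1%:M : 'M[K]_2).
Definition M23 (K : pzRingType) (A : 'M[K]_4) : 'M[K]_8 := (1%:M : 'M[K]_2) *t A.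

Definition YBE (R : rcfType) (c : R[i] -> R[i]) (x y : R[i]) : Prop :=
  M12 (Rhatx c x) *m M23 (Rhatx c (x * y)) *m M12 (Rhatx c y)
  = M23 (Rhatx c y) *m M12 (Rhatx c (x * y)) *m M23 (Rhatx c x).

(* Main.v *)
Require Import Defs.
From HB Require Import structures.
From mathcomp Require Import all_boot all_order all_algebra.
From mathcomp Require Import complex mxtens.
Import Order.TTheory GRing.Theory Num.Theory.
Local Open Scope ring_scope.
From mathcomp Require Import ring.

Definition mat n (f : nat -> nat -> int) : 'M[int]_n := \matrix_(i < n, j < n) f i j.
Definition fmul n (f g : nat -> nat -> int) i j :=
  foldr (fun k a => f i k * g k j + a) 0 (iota 0 n).

Lemma sum_foldr (n : nat) (F : nat -> int) :
  \sum_(k < n) F k = foldr (fun k a => F k + a) 0 (iota 0 n).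
Proof. by rewrite -(big_mkord xpredT) /index_iota subn0 unlock. Qed.

Lemma mat_mul n f g : mat n f *m mat n g = mat n (fmul n f g).
Proof.
apply/matrixP=> i j; rewrite !mxE /fmul -sum_foldr.
by apply: eq_bigr => k _; rewrite !mxE.
Qed.

Lemma mat_eq n f g :
  all (fun i => all (fun j => f i j == g i j) (iota 0 n)) (iota 0 n) ->
  mat n f = mat n g.
Proof.
move=> /allP H; apply/matrixP=> i j; rewrite !mxE.
have Hi : (nat_of_ord i \in iota 0 n) by rewrite mem_iota /=.
have /allP H2 := H _ Hi.
have Hj : (nat_of_ord j \in iota 0 n) by rewrite mem_iota /=.
exact/eqP/(H2 _ Hj).
Qed.

Lemma mat_add n f g : mat n f + mat n g = mat n (fun i j => f i j + g i j).
Proof. by apply/matrixP=> i j; rewrite !mxE. Qed.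
Lemma mat_one n : (1%:M : 'M[int]_n) = mat n (fun i j => (i == j)%:R).
Proof. by apply/matrixP=> i j; rewrite !mxE. Qed.

Lemma M12_mat f : M12 (mat 4 f) = mat 8 (fun i j => f (i %/ 2)%N (j %/ 2)%N * (i %% 2 == j %% 2)%N%:R).
Proof. apply/matrixP=> i j; by rewrite !mxE. Qed.
Lemma M23_mat f : M23 (mat 4 f) = mat 8 (fun i j => (i %/ 4 == j %/ 4)%N%:R * f (i %% 4)%N (j %% 4)%N).
Proof. apply/matrixP=> i j; by rewrite !mxE. Qed.

Definition RZ : 'M[int]_4 := mat 4 (fun a b => nth 0 (nth [::] Rhat_entries a) b).

Lemma braidZ : M12 RZ *m M23 RZ *m M12 RZ = M23 RZ *m M12 RZ *m M23 RZ.
Proof. by rewrite /RZ M12_mat M23_mat !mat_mul; apply: mat_eq; vm_compute. Qed.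

Lemma sqZ : RZ *m RZ + 1%:M + 1%:M = RZ + RZ.
Proof. by rewrite /RZ mat_one mat_mul !mat_add; apply: mat_eq; vm_compute. Qed.

Lemma entryZ : (M12 RZ - M23 RZ) (inord 0) (inord 6) = 1.
Proof. by rewrite /RZ M12_mat M23_mat !mxE !inordK. Qed.

Section Alg.
Variables (K : comNzRingType) (A : algType K).
Variables (P Q W : A).
Definition V (i : 'I_6) : A := nth 0 [:: 1; P; Q; P * Q; Q * P; W] i.
Definition L (c : 'rV[K]_6) : A := \sum_(i < 6) c 0 i *: V i.

Lemma L_add u w : L u + L w = L (u + w).
Proof. by rewrite /L -big_split; apply: eq_bigr => i _; rewrite mxE scalerDl. Qed.
Lemma L_opp u : - L u = L (- u).
Proof. by rewrite /L -sumrN; apply: eq_bigr => i _; rewrite mxE scaleNr. Qed.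
Lemma sV k s : s *: V k = L (s *: delta_mx 0 k).
Proof.
rewrite /L (bigD1 k) //= big1 ?addr0; first by rewrite !mxE !eqxx mulr1.
by move=> i /negPf Hi; rewrite !mxE Hi andbF mulr0 scale0r.
Qed.

Lemma key (x y z : K) : P * P = 2 *: P - 2 *: 1 -> Q * Q = 2 *: Q - 2 *: 1 ->
  P * Q * P = W -> Q * P * Q = W ->
  (1 + x *: P) * (1 + y *: Q) * (1 + z *: P) - (1 + z *: Q) * (1 + y *: P) * (1 + x *: Q)
  = (x + z + 2 * x * z - y) *: (P - Q).
Proof.
move=> hP hQ h1 h2.
rewrite !(mulrDl, mulrDr, mul1r, mulr1, =^~ scalerAl, =^~ scalerAr, scalerA) ?mulrA hP hQ h1 h2.
rewrite !(scalerBr, scalerDr, scalerA).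
have s1 s : s *: 1 = L (s *: delta_mx 0 (@Ordinal 6 0 isT)) := sV (@Ordinal 6 0 isT) s.
have sP s : s *: P = L (s *: delta_mx 0 (@Ordinal 6 1 isT)) := sV (@Ordinal 6 1 isT) s.
have sQ s : s *: Q = L (s *: delta_mx 0 (@Ordinal 6 2 isT)) := sV (@Ordinal 6 2 isT) s.
have sPQ s : s *: (P * Q) = L (s *: delta_mx 0 (@Ordinal 6 3 isT)) := sV (@Ordinal 6 3 isT) s.
have sQP s : s *: (Q * P) = L (s *: delta_mx 0 (@Ordinal 6 4 isT)) := sV (@Ordinal 6 4 isT) s.
have sW s : s *: W = L (s *: delta_mx 0 (@Ordinal 6 5 isT)) := sV (@Ordinal 6 5 isT) s.
rewrite !(s1, sP, sQ, sPQ, sQP, sW).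
rewrite -(scale1r (1 : A)) !s1.
rewrite !(L_add, L_opp).
congr L; apply/rowP => i; rewrite !mxE.
case: i => [[|[|[|[|[|[|i]]]]]] Hi] //=; ring.
Qed.
End Alg.

Section Tens.
Variable K : comNzRingType.
Implicit Types X Y : 'M[K]_4.

Lemma M12D X Y : M12 (X + Y) = M12 X + M12 Y.
Proof. by apply/matrixP=> i j; rewrite !mxE mulrDl. Qed.
Lemma M23D X Y : M23 (X + Y) = M23 X + M23 Y.
Proof. by apply/matrixP=> i j; rewrite !mxE mulrDr. Qed.
Lemma M12Z a X : M12 (a *: X) = a *: M12 X.
Proof. by apply/matrixP=> i j; rewrite !mxE mulrA. Qed.
Lemma M23Z a X : M23 (a *: X) = a *: M23 X.
Proof. by apply/matrixP=> i j; rewrite !mxE mulrCA. Qed.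
Lemma M12_1 : M12 (1%:M : 'M[K]_4) = 1%:M.
Proof.
apply/matrixP=> i j.
case: (@mxtens_indexP 4 2 i)=> i0 i1; case: (@mxtens_indexP 4 2 j)=> j0 j1.
rewrite /M12 !mxE !(@mxtens_indexK 4 2) /= (can_eq (@mxtens_indexK 4 2)) xpair_eqE.
by case: (i0 == j0); case: (i1 == j1); rewrite /= ?mulr1 ?mulr0 ?mul0r.
Qed.
Lemma M23_1 : M23 (1%:M : 'M[K]_4) = 1%:M.
Proof.
apply/matrixP=> i j.
case: (@mxtens_indexP 2 4 i)=> i0 i1; case: (@mxtens_indexP 2 4 j)=> j0 j1.
rewrite /M23 !mxE !(@mxtens_indexK 2 4) /= (can_eq (@mxtens_indexK 2 4)) xpair_eqE.
by case: (i0 == j0); case: (i1 == j1); rewrite /= ?mulr1 ?mulr0 ?mul0r.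
Qed.
Lemma M12M X Y : M12 (X *m Y) = M12 X *m M12 Y.
Proof. by rewrite /M12; have := tensmx_mul X (1%:M : 'M[K]_2) Y 1%:M; rewrite mulmx1 => ->. Qed.
Lemma M23M X Y : M23 (X *m Y) = M23 X *m M23 Y.
Proof. by rewrite /M23; have := tensmx_mul (1%:M : 'M[K]_2) X 1%:M Y; rewrite mulmx1 => ->. Qed.
End Tens.

Lemma RhatE (R : rcfType) : Rhat R = map_mx intr RZ.
Proof. by apply/matrixP=> i j; rewrite !mxE. Qed.

Lemma M12map (R : rcfType) (X : 'M[int]_4) : M12 (map_mx (intr : int -> R[i]) X) = map_mx intr (M12 X).
Proof. by apply/matrixP=> i j; rewrite !mxE rmorphM rmorph_nat. Qed.
Lemma M23map (R : rcfType) (X : 'M[int]_4) : M23 (map_mx (intr : int -> R[i]) X) = map_mx intr (M23 X).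
Proof. by apply/matrixP=> i j; rewrite !mxE rmorphM rmorph_nat. Qed.

Section Main.
Variable R : rcfType.
Local Notation K := (R[i]).
Local Notation P := (M12 (Rhat R)).
Local Notation Q := (M23 (Rhat R)).

Lemma mapM (X Y : 'M[int]_8) : map_mx (intr : int -> K) (X *m Y) = map_mx intr X *m map_mx intr Y.
Proof. exact: map_mxM. Qed.
Lemma mapD (X Y : 'M[int]_8) : map_mx (intr : int -> K) (X + Y) = map_mx intr X + map_mx intr Y.
Proof. exact: map_mxD. Qed.
Lemma map1 : map_mx (intr : int -> K) (1%:M : 'M_8) = 1%:M.
Proof. exact: map_mx1. Qed.

Lemma hPP : P *m P = 2 *: P - 2 *: 1%:M.
Proof.
have := congr1 (fun X => map_mx (intr : int -> K) (M12 X)) sqZ => /=.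
rewrite !M12D M12M M12_1 !mapD mapM map1 -!M12map -RhatE => E.
by rewrite !scaler_nat !mulr2n -E -(addrA (P *m P)) addrK.
Qed.

Lemma hQQ : Q *m Q = 2 *: Q - 2 *: 1%:M.
Proof.
have := congr1 (fun X => map_mx (intr : int -> K) (M23 X)) sqZ => /=.
rewrite !M23D M23M M23_1 !mapD mapM map1 -!M23map -RhatE => E.
by rewrite !scaler_nat !mulr2n -E -(addrA (Q *m Q)) addrK.
Qed.

Lemma hbr : P *m Q *m P = Q *m P *m Q.
Proof.
have := congr1 (map_mx (intr : int -> K)) braidZ.
by rewrite !mapM -!M12map -!M23map -RhatE.
Qed.

Lemma PQ_neq0 : P - Q != 0.
Proof.
apply/negP => /eqP H.
have := congr1 (fun X : 'M[K]_8 => X (inord 0) (inord 6)) H.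
rewrite RhatE M12map M23map -(@map_mxB _ _ (intr : {rmorphism int -> K})).
rewrite mxE entryZ /= => /eqP; rewrite mxE oner_eq0.
done.
Qed.

Lemma keyK (a d b : K) :
  (1%:M + a *: P) *m (1%:M + d *: Q) *m (1%:M + b *: P)
  - (1%:M + b *: Q) *m (1%:M + d *: P) *m (1%:M + a *: Q)
  = (a + b + 2 * a * b - d) *: (P - Q).
Proof.
have := @key K 'M[K]_8 P Q (P *m Q *m P) a d b.
rewrite -!mulmxE; apply.
- exact: hPP.
- exact: hQQ.
- by [].
- by rewrite hbr.
Qed.
End Main.
Theorem mainTheorem2 (R : rcfType) (G : {pred R[i]})
  (hG0 : forall x, x \in G -> x != 0)
  (hGM : forall x y, x \in G -> y \in G -> x * y \in G) :
  (forall c : R[i] -> R[i],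
     (forall x y, x \in G -> y \in G ->
        M12 (Rhatx c x) *m M23 (Rhatx c (x * y)) *m M12 (Rhatx c y)
        - M23 (Rhatx c y) *m M12 (Rhatx c (x * y)) *m M23 (Rhatx c x)
        = (c x + c y + 2 * c x * c y - c (x * y)) *: (M12 (Rhat R) - M23 (Rhat R)))
     /\
     ((forall x y, x \in G -> y \in G -> YBE c x y) <->
      (forall x y, x \in G -> y \in G -> c x + c y + 2 * c x * c y = c (x * y))))
  /\
  (forall p : int, forall x y, x \in G -> y \in G ->
     YBE (fun z : R[i] => (z ^ p - 1) / 2) x y).
Proof.
have M12x c x : M12 (Rhatx c x) = 1%:M + c x *: M12 (Rhat R).
  by rewrite /Rhatx M12D M12Z M12_1.
have M23x c x : M23 (Rhatx c x) = 1%:M + c x *: M23 (Rhat R).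
  by rewrite /Rhatx M23D M23Z M23_1.
have part1 : forall c : R[i] -> R[i], forall x y,
        M12 (Rhatx c x) *m M23 (Rhatx c (x * y)) *m M12 (Rhatx c y)
        - M23 (Rhatx c y) *m M12 (Rhatx c (x * y)) *m M23 (Rhatx c x)
        = (c x + c y + 2 * c x * c y - c (x * y)) *: (M12 (Rhat R) - M23 (Rhat R)).
  by move=> c x y; rewrite !M12x !M23x keyK.
have ybe (c : R[i] -> R[i]) (x y : R[i]) : YBE c x y <-> c x + c y + 2 * c x * c y = c (x * y).
  rewrite /YBE; split => H.
  - have := part1 c x y; rewrite H subrr => /esym/eqP.
    by rewrite scaler_eq0 (negPf (PQ_neq0 R)) orbF subr_eq0 => /eqP.
  - by apply/eqP; rewrite -subr_eq0 part1 H subrr scale0r.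
split.
  move=> c; split; first by move=> x y _ _; exact: part1.
  by split=> H x y Hx Hy; apply/ybe; apply: H.
move=> p x y Hx Hy; apply/ybe.
have ux : x \is a GRing.unit by rewrite unitfE hG0.
have uy : y \is a GRing.unit by rewrite unitfE hG0.
rewrite exprzMl //.
have h2 : (2 : R[i]) != 0 by rewrite pnatr_eq0.
by field.
Qed.
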